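(* Let $(S,V)$ be a complete semiring-semimodule pair, let $n\ge1$, let $\Gamma$ be an alphabet, and let $M\in (S^{n\times n})^{\Gamma^*\times\Gamma^*}$ be a pushdown transition matrix. Then for all $k\ge1$, $p_1,\dots,p_k\in\Gamma$ and $0\le l\le n$, $$(M^{\omega,l})_{p_1\dots p_k}=\sum_{1\le j\le k}(M^* )_{p_1\dots p_{j-1},\epsilon}\,(M^{\omega,l})_{p_j}.$$
   Context: A complete semiring-semimodule pair $(S,V)$ (in the sense of Ésik and Kuich, ''Modern Automata Theory'') consists of a complete starsemiring $S$ (arbitrary sums with infinite associativity/commutativity/distributivity laws, star $s^*=\sum_{j\ge0}s^j$) and a complete $S$-semimodule $V$, with infinite products $\prod_{j\ge1}s_j\in V$ of sequences in $S$ satisfying the axioms of that framework. $M\in (S^{n\times n})^{\Gamma^*\times\Gamma^*}$ (a $\Gamma^*\times\Gamma^*$ matrix with $n\times n$ blocks over $S$) is a pushdown transition matrix if (i) for each $p\in\Gamma$ only finitely many blocks $M_{p,\pi}$ are nonzero, and (ii) $M_{\pi_1,\pi_2}=M_{p,\pi}$ if $\pi_1=p\pi'$, $\pi_2=\pi\pi'$ for some $p\in\Gamma$, $\pi,\pi'\in\Gamma^*$, and $0$ otherwise. $M^*=\sum_{m\ge0}M^m$ with blocks $(M^* )_{\pi,\pi'}$; $p_1\dots p_0=\epsilon$. Let $P_l=\{(j_1,j_2,\dots)\in\{1,\dots,n\}^\omega\mid j_t\le l\text{ for infinitely many }t\}$. Then $M^{\omega,l}\in (V^n)^{\Gamma^*}$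 is the column vector with $$((M^{\omega,l})_\pi)_i=\sum_{\pi_1,\pi_2,\ldots\in\Gamma^*}\ \sum_{(j_1,j_2,\ldots)\in P_l}(M_{\pi,\pi_1})_{i,j_1}(M_{\pi_1,\pi_2})_{j_1,j_2}(M_{\pi_2,\pi_3})_{j_2,j_3}\cdots,$$ i.e. the sum of weights of all infinite paths from $(\pi,i)$ in the graph on $\Gamma^*\times\{1,\dots,n\}$ with adjacency matrix $M$ that visit vertices $(\pi',i')$ with $i'\le l$ infinitely often. *)

(* Defs.v *)
From mathcomp Require Import all_boot.

Set Implicit Arguments.
Unset Strict Implicit.
Unset Printing Implicit Defensive.

Record CSemiring := {
  scar :> Type;
  sadd : scar -> scar -> scar;
  smul : scar -> scar -> scar;
  szero : scar;
  sone : scar;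
  ssum : forall I : Type, (I -> scar) -> scar;
  saddA : forall a b c, sadd a (sadd b c) = sadd (sadd a b) c;
  saddC : forall a b, sadd a b = sadd b a;
  sadd0 : forall a, sadd szero a = a;
  smulA : forall a b c, smul a (smul b c) = smul (smul a b) c;
  smul1l : forall a, smul sone a = a;
  smul1r : forall a, smul a sone = a;
  smulDl : forall a b c, smul (sadd a b) c = sadd (smul a c) (smul b c);
  smulDr : forall a b c, smul a (sadd b c) = sadd (smul a b) (smul a c);
  smul0l : forall a, smul szero a = szero;
  smul0r : forall a, smul a szero = szero;
  ssum_empty : forall (I : Type) (f : I -> scar), (I -> False) -> ssum f = szero;
  ssum_single : forall (I : Type) (f : I -> scar) (i0 : I),
      (forall i, i = i0) -> ssum f = f i0;
  ssum_two : forall f : bool -> scar, ssum f = sadd (f true) (f false);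
  (* generalized associativity/commutativity: partition of the index set
     into the fibres of g *)
  ssum_partition : forall (I J : Type) (g : I -> J) (f : I -> scar),
      ssum f = ssum (fun j : J => ssum (fun i : {i : I | g i = j} => f (proj1_sig i)));
  ssum_mull : forall (a : scar) (I : Type) (f : I -> scar),
      smul a (ssum f) = ssum (fun i => smul a (f i));
  ssum_mulr : forall (a : scar) (I : Type) (f : I -> scar),
      smul (ssum f) a = ssum (fun i => smul (f i) a)
}.

Definition spow (S : CSemiring) (s : S) (m : nat) : S := iter m (smul s) (sone S).
Definition sstar (S : CSemiring) (s : S) : S := ssum (fun m : nat => spow s m).

Definition sfinprod (S : CSemiring) (s : nat -> S) (a b : nat) : S :=
  foldr (fun j acc => smul (s j) acc) (sone S) (iota a (b - a)).

(* from 0 (the paper's s_1 is our s 0).                                *)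
Record CSemimodulePair (S : CSemiring) := {
  vcar :> Type;
  vadd : vcar -> vcar -> vcar;
  vzero : vcar;
  vsum : forall I : Type, (I -> vcar) -> vcar;
  vscale : S -> vcar -> vcar;
  vprod : (nat -> S) -> vcar;
  vaddA : forall a b c, vadd a (vadd b c) = vadd (vadd a b) c;
  vaddC : forall a b, vadd a b = vadd b a;
  vadd0 : forall a, vadd vzero a = a;
  vsum_empty : forall (I : Type) (f : I -> vcar), (I -> False) -> vsum f = vzero;
  vsum_single : forall (I : Type) (f : I -> vcar) (i0 : I),
      (forall i, i = i0) -> vsum f = f i0;
  vsum_two : forall f : bool -> vcar, vsum f = vadd (f true) (f false);
  vsum_partition : forall (I J : Type) (g : I -> J) (f : I -> vcar),
      vsum f = vsum (fun j : J => vsum (fun i : {i : I | g i = j} => f (proj1_sig i)));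
  vscaleA : forall (s t : S) v, vscale (smul s t) v = vscale s (vscale t v);
  vscale1 : forall v, vscale (sone S) v = v;
  vscaleDl : forall (s t : S) v, vscale (sadd s t) v = vadd (vscale s v) (vscale t v);
  vscaleDr : forall (s : S) v w, vscale s (vadd v w) = vadd (vscale s v) (vscale s w);
  vscale0l : forall v, vscale (szero S) v = vzero;
  vscale0r : forall s : S, vscale s vzero = vzero;
  vsum_scalel : forall (I : Type) (f : I -> S) (v : vcar),
      vscale (ssum f) v = vsum (fun i => vscale (f i) v);
  vsum_scaler : forall (s : S) (I : Type) (f : I -> vcar),
      vscale s (vsum f) = vsum (fun i => vscale s (f i));
  vprod_cons : forall s : nat -> S, vprod s = vscale (s 0) (vprod (fun j => s j.+1));
  vprod_group : forall (s : nat -> S) (nn : nat -> nat),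
      nn 0 = 0 -> (forall j, nn j < nn j.+1) ->
      vprod s = vprod (fun j => sfinprod s (nn j) (nn j.+1));
  vprod_sum : forall (I : nat -> Type) (f : forall j, I j -> S),
      vprod (fun j => ssum (f j)) =
      vsum (fun g : (forall j, I j) => vprod (fun j => f j (g j)))
}.

(* M pi1 pi2 i j = (M_{pi1,pi2})_{i,j}; states 1..n are 'I_n (0-based).*)
Section Matrices.
Variables (S : CSemiring) (Gamma : finType) (n : nat).

Definition bmx := seq Gamma -> seq Gamma -> 'I_n -> 'I_n -> S.

Definition bmx_mul (A B : bmx) : bmx := fun pi1 pi2 i j =>
  ssum (fun x : seq Gamma * 'I_n => smul (A pi1 x.1 i x.2) (B x.1 pi2 x.2 j)).

Definition bmx_one : bmx := fun pi1 pi2 i j =>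
  if (pi1 == pi2) && (i == j) then sone S else szero S.

Definition bmx_pow (A : bmx) (m : nat) : bmx := iter m (fun X => bmx_mul X A) bmx_one.

Definition bmx_star (A : bmx) : bmx := fun pi1 pi2 i j =>
  ssum (fun m : nat => bmx_pow A m pi1 pi2 i j).

Definition pushdown_transition (M : bmx) : Prop :=
  (forall p : Gamma, exists L : seq (seq Gamma),
      forall pi, pi \notin L -> forall i j, M [:: p] pi i j = szero S) /\
  (forall (p : Gamma) (pi pi' : seq Gamma) i j,
      M (p :: pi') (pi ++ pi') i j = M [:: p] pi i j) /\
  (forall pi1 pi2 : seq Gamma,
      ~ (exists (p : Gamma) (pi pi' : seq Gamma), pi1 = p :: pi' /\ pi2 = pi ++ pi') ->
      forall i j, M pi1 pi2 i j = szero S).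

Definition inf_often (P : nat -> Prop) : Prop := forall N, exists t, N <= t /\ P t.

(* P_l : state sequences (0-based states) with a state in {1..l}
   (i.e. 0-based index < l) infinitely often *)
Definition Pl (l : nat) (js : nat -> 'I_n) : Prop := inf_often (fun t => js t < l).

Variable V : CSemimodulePair S.

(* weight sequence of the infinite path (pi,i) -> (pis 0, js 0) -> (pis 1, js 1) -> ... *)
Definition path_weights (M : bmx) (pi : seq Gamma) (i : 'I_n)
    (pis : nat -> seq Gamma) (js : nat -> 'I_n) : nat -> S :=
  fun t => match t with
           | 0 => M pi (pis 0) i (js 0)
           | t'.+1 => M (pis t') (pis t'.+1) (js t') (js t'.+1)
           end.

Definition omega_l (M : bmx) (l : nat) (pi : seq Gamma) (i : 'I_n) : V :=
  vsum (fun x : {x : (nat -> seq Gamma) * (nat -> 'I_n) | Pl l x.2} =>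
          vprod V (path_weights M pi i (proj1_sig x).1 (proj1_sig x).2)).

End Matrices.

(* Main.v *)
Require Import Defs.
From mathcomp Require Import all_boot.
From Stdlib Require Import ProofIrrelevance FunctionalExtensionality ClassicalEpsilon Classical.

Set Implicit Arguments.
Unset Strict Implicit.
Unset Printing Implicit Defensive.

Lemma sig_eqI (A : Type) (P : A -> Prop) (x y : {a | P a}) :
  proj1_sig x = proj1_sig y -> x = y.
Proof.
case: x => a pa; case: y => b pb /= e; subst b; f_equal; apply: proof_irrelevance.
Qed.

Section CSum.
Variables (T : Type) (add : T -> T -> T) (zero : T)
  (sum : forall I : Type, (I -> T) -> T).
Hypothesis addC : forall a b, add a b = add b a.
Hypothesis add0 : forall a, add zero a = a.
Hypothesis sum_single : forall (I : Type) (f : I -> T) (i0 : I),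
      (forall i, i = i0) -> sum f = f i0.
Hypothesis sum_two : forall f : bool -> T, sum f = add (f true) (f false).
Hypothesis sum_partition : forall (I J : Type) (g : I -> J) (f : I -> T),
      sum f = sum (fun j : J => sum (fun i : {i : I | g i = j} => f (proj1_sig i))).
Hypothesis sum_zero : forall I : Type, sum (fun _ : I => zero) = zero.

Lemma sum_ext (I : Type) (f g : I -> T) : (forall i, f i = g i) -> sum f = sum g.
Proof. by move=> e; rewrite (functional_extensionality f g e). Qed.

Lemma sum_reindex (I J : Type) (h : J -> I) (f : I -> T) :
  (forall j1 j2, h j1 = h j2 -> j1 = j2) -> (forall i, exists j, h j = i) ->
  sum f = sum (fun j => f (h j)).
Proof.
move=> hinj hsurj; rewrite (sum_partition h (fun j => f (h j))).
apply: sum_ext => i.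
have [j0 e0] := constructive_indefinite_description _ (hsurj i).
rewrite (@sum_single _ _ (exist _ j0 e0)) /= ?e0 //.
case=> j e; apply: sig_eqI => /=; apply: hinj; by rewrite e e0.
Qed.

Definition pdec (P : Prop) : bool := if excluded_middle_informative P then true else false.
Lemma pdecP (P : Prop) : pdec P = true <-> P.
Proof. rewrite /pdec; case: excluded_middle_informative => //. Qed.

Lemma sum_restrict (I : Type) (P : I -> Prop) (f : I -> T) :
  (forall i, ~ P i -> f i = zero) ->
  sum f = sum (fun x : {i | P i} => f (proj1_sig x)).
Proof.
move=> fz; rewrite (sum_partition (fun i => pdec (P i)) f) sum_two.
have -> : sum (fun i : {i | pdec (P i) = false} => f (proj1_sig i)) = zero.
  rewrite -(sum_zero {i | pdec (P i) = false}); apply: sum_ext => -[i e] /=.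
  apply: fz => /pdecP; by rewrite e.
rewrite addC add0.
have hh : forall x : {i | P i}, pdec (P (proj1_sig x)) = true.
  by case=> i pi; apply/pdecP.
rewrite (@sum_reindex _ _ (fun x : {i | P i} => exist _ (proj1_sig x) (hh x))) /=.
  by [].
- by move=> x y [] e; apply: sig_eqI.
- case=> i e; have pi : P i by apply/pdecP.
  by exists (exist _ i pi); apply: sig_eqI.
Qed.

Lemma sum_supp_bij (I J : Type) (f : I -> T) (g : J -> T) (PI : I -> Prop) (PJ : J -> Prop)
  (h : J -> I) :
  (forall i, ~ PI i -> f i = zero) -> (forall j, ~ PJ j -> g j = zero) ->
  (forall j, PJ j -> PI (h j)) ->
  (forall j1 j2, PJ j1 -> PJ j2 -> h j1 = h j2 -> j1 = j2) ->
  (forall i, PI i -> exists j, PJ j /\ h j = i) ->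
  (forall j, PJ j -> f (h j) = g j) -> sum f = sum g.
Proof.
move=> fz gz hP hinj hsurj hw.
rewrite (sum_restrict fz) (sum_restrict gz).
rewrite (@sum_reindex _ _ (fun x : {j | PJ j} => exist _ (h (proj1_sig x)) (hP _ (proj2_sig x)))) /=.
- apply: sum_ext => -[j pj] /=; exact: hw.
- move=> [x px] [y py] [] e; apply: sig_eqI => /=; exact: hinj.
- case=> i pi; have [j [pj e]] := hsurj i pi.
  by exists (exist _ j pj); apply: sig_eqI.
Qed.

Lemma sum_pair (A B : Type) (f : A * B -> T) :
  sum f = sum (fun a => sum (fun b => f (a, b))).
Proof.
rewrite (sum_partition fst f); apply: sum_ext => a.
rewrite (@sum_reindex _ _ (fun b : B => exist (fun x : A * B => x.1 = a) (a, b) erefl)) //.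
- by move=> b1 b2 [].
- by case=> -[a' b] /= e; subst a'; exists b; apply: sig_eqI.
Qed.

Lemma sum_exchange (A B : Type) (f : A -> B -> T) :
  sum (fun a => sum (fun b => f a b)) = sum (fun b => sum (fun a => f a b)).
Proof.
rewrite -(sum_pair (fun x => f x.1 x.2)) -(sum_pair (fun x => f x.2 x.1)).
rewrite (@sum_reindex _ _ (fun x : B * A => (x.2, x.1))) //.
- by move=> [? ?] [? ?] [-> ->].
- by case=> a b; exists (b, a).
Qed.

Lemma sum_sumtype (A B : Type) (f : A + B -> T) :
  sum f = add (sum (fun a => f (inl a))) (sum (fun b => f (inr b))).
Proof.
pose g (x : A + B) := if x is inl _ then true else false.
rewrite (sum_partition g f) sum_two; congr add.
- rewrite (@sum_reindex _ _ (fun a : A => exist (fun x => g x = true) (inl a) erefl)) //.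
  + by move=> a1 a2 [].
  + by case=> -[a|b] //= e; exists a; apply: sig_eqI.
- rewrite (@sum_reindex _ _ (fun b : B => exist (fun x => g x = false) (inr b) erefl)) //.
  + by move=> a1 a2 [].
  + by case=> -[a|b] //= e; exists b; apply: sig_eqI.
Qed.

Lemma sum_single_nz (I : Type) (f : I -> T) (i0 : I) :
  (forall i, i <> i0 -> f i = zero) -> sum f = f i0.
Proof.
move=> fz; rewrite (@sum_restrict _ (fun i => i = i0)) //.
rewrite (@sum_single _ _ (exist (fun i => i = i0) i0 erefl)) //.
by case=> i e; apply: sig_eqI.
Qed.

End CSum.

Lemma catsI (T : eqType) (a b r : seq T) : a ++ r = b ++ r -> a = b.
Proof.
move=> e; have hs : size a = size b.
  by have := congr1 size e; rewrite !size_cat => /eqP; rewrite eqn_add2r => /eqP.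
by have := eqseq_cat r r hs; rewrite e eqxx => /esym/andP[/eqP ->].
Qed.

Section Main.
Variables (S : CSemiring) (V : CSemimodulePair S) (n : nat) (Gamma : finType)
  (M : bmx S Gamma n).
Hypothesis HM : pushdown_transition M.

Lemma ssum0 (I : Type) : ssum (fun _ : I => szero S) = szero S.
Proof.
have := ssum_mull (szero S) (fun _ : I => szero S).
rewrite smul0l => e; rewrite [RHS]e; apply: sum_ext => i; by rewrite smul0l.
Qed.

Lemma vsum0 (I : Type) : vsum (fun _ : I => vzero V) = vzero V.
Proof.
have := vsum_scaler (szero S) (fun _ : I => vzero V).
rewrite vscale0l => e; rewrite [RHS]e; apply: sum_ext => i; by rewrite vscale0l.
Qed.

Definition sreindex := sum_reindex (@ssum_single S) (@ssum_partition S).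
Definition vreindex := sum_reindex (@vsum_single S V) (@vsum_partition S V).
Definition spair := sum_pair (@ssum_single S) (@ssum_partition S).
Definition vpair := sum_pair (@vsum_single S V) (@vsum_partition S V).
Definition sexch := sum_exchange (@ssum_single S) (@ssum_partition S).
Definition vexch := sum_exchange (@vsum_single S V) (@vsum_partition S V).
Definition vsumtype := sum_sumtype (@vsum_single S V) (@vsum_two S V) (@vsum_partition S V).
Definition snz := sum_single_nz (@saddC S) (@sadd0 S) (@ssum_single S) (@ssum_two S)
  (@ssum_partition S) ssum0.
Definition vnz := sum_single_nz (@vaddC S V) (@vadd0 S V) (@vsum_single S V) (@vsum_two S V)
  (@vsum_partition S V) vsum0.
Definition vsupp := sum_supp_bij (@vaddC S V) (@vadd0 S V) (@vsum_single S V) (@vsum_two S V)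
  (@vsum_partition S V) vsum0.

Notation G := (seq Gamma).
Notation Q := ('I_n).
Notation VT := (G * Q)%type.

Definition wM (a b : VT) : S := M a.1 b.1 a.2 b.2.
Definition vx (a : VT) (pis : nat -> G) (js : nat -> Q) (t : nat) : VT :=
  if t is t'.+1 then (pis t', js t') else a.

Lemma pwE pi i pis js t :
  path_weights M pi i pis js t = wM (vx (pi, i) pis js t) (vx (pi, i) pis js t.+1).
Proof. by case: t. Qed.

Definition vstep (a b : VT) : Prop :=
  exists p pi tau, a.1 = p :: tau /\ b.1 = pi ++ tau.

Lemma wM_nstep a b : ~ vstep a b -> wM a b = szero S.
Proof. move=> h; case: HM => _ [_ H3]; exact: H3. Qed.

Lemma wM_step a b : vstep a b -> exists p pi, wM a b = M [:: p] pi a.2 b.2 /\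
   forall rho, wM (a.1 ++ rho, a.2) (b.1 ++ rho, b.2) = M [:: p] pi a.2 b.2.
Proof.
case=> p [pi [tau [ea eb]]]; exists p, pi; case: HM => _ [H2 _].
rewrite /wM ea eb H2; split => // rho /=; by rewrite -catA H2.
Qed.

Lemma wM_lift a b rho : vstep a b -> wM (a.1 ++ rho, a.2) (b.1 ++ rho, b.2) = wM a b.
Proof. by move=> /wM_step [p [pi [-> ->]]]. Qed.

Lemma vstep_lift a b rho : vstep a b -> vstep (a.1 ++ rho, a.2) (b.1 ++ rho, b.2).
Proof.
case=> p [pi [tau [ea eb]]]; exists p, pi, (tau ++ rho) => /=.
by rewrite ea eb catA.
Qed.

Lemma vstep_src a b : vstep a b -> a.1 <> [::].
Proof. by case=> p [pi [tau [-> _]]]. Qed.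

Lemma vstep_unlift a b rho : a.1 <> [::] ->
  vstep (a.1 ++ rho, a.2) (b.1 ++ rho, b.2) -> vstep a b.
Proof.
case: a => [[|p tau] x] //= _ [p' [pi [tau' [/= [ep et] eb]]]].
exists p, pi, tau; split => //=; subst tau'.
by apply: (@catsI _ _ _ rho); rewrite eb -catA.
Qed.

Lemma vstep_suffix tau rho x b : tau <> [::] -> vstep (tau ++ rho, x) b ->
  exists tau', b.1 = tau' ++ rho.
Proof.
case: tau => [|p tau] // _ [p' [pi [tau' [/= [ep et] eb]]]].
by exists (pi ++ tau); rewrite eb -et catA.
Qed.

Definition valid (a : VT) pis js := forall t, vstep (vx a pis js t) (vx a pis js t.+1).

Lemma vprod_zero (s : nat -> S) t : s t = szero S -> vprod V s = vzero V.
Proof.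
elim: t s => [|t IH] s h; rewrite vprod_cons.
  by rewrite h vscale0l.
by rewrite (IH (fun j => s j.+1)) // vscale0r.
Qed.

Lemma vprod_invalid pi i pis js : ~ valid (pi, i) pis js ->
  vprod V (path_weights M pi i pis js) = vzero V.
Proof.
move=> /not_all_ex_not [t ht]; apply: (@vprod_zero _ t).
by rewrite pwE wM_nstep.
Qed.

Fixpoint fp (s : nat -> S) (m : nat) : S :=
  if m is m'.+1 then smul (s 0) (fp (fun t => s t.+1) m') else sone S.

Lemma vprod_split (s : nat -> S) m :
  vprod V s = vscale (fp s m) (vprod V (fun t => s (t + m))).
Proof.
elim: m s => [|m IH] s /=.
  rewrite vscale1; congr (vprod V); apply: functional_extensionality => t; by rewrite addn0.
rewrite [LHS]vprod_cons [in LHS]IH -vscaleA; do 2 f_equal.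

apply: functional_extensionality => t; by rewrite addnS.
Qed.

Fixpoint fw (a : VT) (u : seq VT) {struct u} : S :=
  if u is b :: u' then smul (wM a b) (fw b u') else sone S.

Fixpoint fvalid (a : VT) (u : seq VT) {struct u} : Prop :=
  if u is b :: u' then vstep a b /\ fvalid b u' else True.

Lemma fw_invalid a u : ~ fvalid a u -> fw a u = szero S.
Proof.
elim: u a => [|b u IH] a //= h.
case: (classic (vstep a b)) => hs.
  rewrite IH ?smul0r //; by move=> hv; apply: h.
by rewrite wM_nstep // smul0l.
Qed.

Lemma fw_rcons a u y : fw a (rcons u y) = smul (fw a u) (wM (last a u) y).
Proof.
elim: u a => [|b u IH] a /=; first by rewrite smul1r smul1l.
by rewrite IH smulA.
Qed.

Lemma size_rcons_m m (u : {u : seq VT | size u = m}) y :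
  size (rcons (proj1_sig u) y) = m.+1.
Proof. by rewrite size_rcons (proj2_sig u). Qed.

Lemma pow_expand m pi1 pi2 i j : bmx_pow M m pi1 pi2 i j =
  ssum (fun u : {u : seq VT | size u = m} =>
    if last (pi1, i) (proj1_sig u) == (pi2, j) then fw (pi1, i) (proj1_sig u) else szero S).
Proof.
elim: m pi2 j => [|m IH] pi2 j.
  rewrite (@ssum_single S _ _ (exist (fun u : seq VT => size u = 0) [::] erefl)) /=.
    by rewrite /bmx_pow /= /bmx_one.
  case=> -[|b u] e //; exact: sig_eqI.
change (bmx_pow M m.+1 pi1 pi2 i j) with
  (ssum (fun x : VT => smul (bmx_pow M m pi1 x.1 i x.2) (wM x (pi2, j)))).
under sum_ext => x do rewrite IH ssum_mulr.
rewrite sexch.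
rewrite (@sreindex _ _ (fun x : {u : seq VT | size u = m} * VT =>
   exist (fun u : seq VT => size u = m.+1) (rcons (proj1_sig x.1) x.2) (size_rcons_m x.1 x.2))).
- rewrite spair; apply: sum_ext => u.
  rewrite (@snz _ _ (last (pi1, i) (proj1_sig u))); last first.
    by move=> [a b] hx; rewrite ifN ?smul0l //; apply/eqP => e; apply: hx; rewrite e.
  rewrite -surjective_pairing eqxx (@snz _ _ (pi2, j)) /=; last first.
    by move=> y hy; rewrite last_rcons ifN //; apply/eqP.
  by rewrite last_rcons eqxx fw_rcons.
- move=> [u1 y1] [u2 y2] [] /rcons_inj [] e1 ->; congr pair; exact: sig_eqI.
- case=> u'; case/lastP: u' => [|s x] // e.
  have es : size s = m by move: e; rewrite size_rcons => -[].
  by exists (exist _ s es, x); apply: sig_eqI.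
Qed.

Lemma star_expand pi1 pi2 i j : bmx_star M pi1 pi2 i j =
  ssum (fun u : seq VT =>
    if last (pi1, i) u == (pi2, j) then fw (pi1, i) u else szero S).
Proof.
rewrite (ssum_partition size); apply: sum_ext => m; exact: pow_expand.
Qed.


Lemma fvalid_nth a u : fvalid a u <->
  (forall t, t < size u -> vstep (nth a (a :: u) t) (nth a (a :: u) t.+1)).
Proof.
elim: u a => [|b u IH] a /=; first by split.
have E : forall t, t < size u -> nth a (b :: u) t = nth b (b :: u) t /\ nth a u t = nth b u t.
  move=> t ht; split; first by rewrite (set_nth_default b a) // ltnW.
  by rewrite (set_nth_default b a).
split.
- case=> hs /IH hv [|t] ht //=.
  have [e1 e2] := E t ht; rewrite e1 e2; exact: hv.
- move=> hh; split; first exact: (hh 0 erefl).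
  apply/IH => t ht; have [e1 e2] := E t ht; have := hh t.+1 ht; rewrite /= e1 e2 //.
Qed.

Lemma fp_fw u a (W : nat -> S) :
  (forall t, t < size u -> W t = wM (nth a (a :: u) t) (nth a u t)) ->
  fp W (size u) = fw a u.
Proof.
elim: u a W => [|b u IH] a W //= h.
rewrite (h 0) //; congr smul; apply: IH => t ht.
have e1 : nth a (b :: u) t = nth b (b :: u) t by rewrite (set_nth_default b a) // ltnW.
have e2 : nth a u t = nth b u t by rewrite (set_nth_default b a).
by rewrite (h t.+1) //= -e1 -e2.
Qed.

Lemma Pl_shift l m (js js' : nat -> Q) : (forall t, js' (t + m) = js t) ->
  Pl l js <-> Pl l js'.
Proof.
move=> e; split.
- move=> h N; have [t [ht pt]] := h N; exists (t + m); split.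
    by rewrite (leq_trans ht) // leq_addr.
  by rewrite e.
- move=> h N; have [t [ht pt]] := h (N + m).
  have hm : m <= t by rewrite (leq_trans _ ht) // leq_addl.
  exists (t - m); split.
    by rewrite leq_subRL // addnC.
  by rewrite -e subnK.
Qed.

Definition strip (rho : G) (s : G) : G := take (size s - size rho) s.
Lemma stripK rho tau : strip rho (tau ++ rho) = tau.
Proof. by rewrite /strip size_cat addnK take_size_cat. Qed.

Section Key.
Variables (l : nat) (sigma rho : G) (i : Q).
Hypothesis sigma_nz : sigma <> [::].

Notation X := {x : (nat -> G) * (nat -> Q) | Pl l x.2}.
Notation a0 := (sigma, i).

Definition catp (u : seq VT) (pis : nat -> G) (t : nat) : G :=
  if t < size u then (nth a0 u t).1 ++ rho else pis (t - size u).
Definition catj (u : seq VT) (js : nat -> Q) (t : nat) : Q :=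
  if t < size u then (nth a0 u t).2 else js (t - size u).

Lemma Pl_cat u (Y : X) : Pl l (catj u (proj1_sig Y).2).
Proof.
apply/(@Pl_shift _ (size u) (proj1_sig Y).2); last exact: proj2_sig Y.
by move=> t; rewrite /catj ltnNge leq_addl /= addnK.
Qed.

Definition liftv (v : VT) : VT := (v.1 ++ rho, v.2).

Definition h (z : X + (seq VT * X)) : X :=
  match z with
  | inl Y => exist (fun x : (nat -> G) * (nat -> Q) => Pl l x.2)
               (fun t => (proj1_sig Y).1 t ++ rho, (proj1_sig Y).2) (proj2_sig Y)
  | inr w => exist (fun x : (nat -> G) * (nat -> Q) => Pl l x.2)
               (catp w.1 (proj1_sig w.2).1, catj w.1 (proj1_sig w.2).2) (Pl_cat w.1 w.2)
  end.

Definition HV z t := vx (sigma ++ rho, i) (proj1_sig (h z)).1 (proj1_sig (h z)).2 t.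
Arguments HV : simpl never.

Lemma HV_inl Y t : HV (inl Y) t = liftv (vx a0 (proj1_sig Y).1 (proj1_sig Y).2 t).
Proof. by case: t. Qed.

Lemma HV_lo u Y t : t <= size u -> HV (inr (u, Y)) t = liftv (nth a0 (a0 :: u) t).
Proof.
case: t => [|t] //= ht; by rewrite /HV /= /catp /catj ht.
Qed.

Lemma HV_hi u (Y : X) t : (last a0 u).1 = [::] ->
  HV (inr (u, Y)) (t + size u) = vx (rho, (last a0 u).2) (proj1_sig Y).1 (proj1_sig Y).2 t.
Proof.
move=> hl; case: t => [|t].
  rewrite add0n HV_lo // /liftv -(last_nth a0) hl /=; by case: (last a0 u).
by rewrite addSn /HV /= /catp /catj ltnNge leq_addl /= addnK.
Qed.


Definition fL (x : X) : V :=
  vprod V (path_weights M (sigma ++ rho) i (proj1_sig x).1 (proj1_sig x).2).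
Definition gR (z : X + (seq VT * X)) : V :=
  match z with
  | inl Y => vprod V (path_weights M sigma i (proj1_sig Y).1 (proj1_sig Y).2)
  | inr w => if (last a0 w.1).1 == [::] then
       vscale (fw a0 w.1) (vprod V (path_weights M rho (last a0 w.1).2
                                     (proj1_sig w.2).1 (proj1_sig w.2).2))
     else vzero V
  end.
Definition PI (x : X) := valid (sigma ++ rho, i) (proj1_sig x).1 (proj1_sig x).2.
Definition PJ (z : X + (seq VT * X)) : Prop :=
  match z with
  | inl Y => valid a0 (proj1_sig Y).1 (proj1_sig Y).2
  | inr w => [/\ fvalid a0 w.1, (last a0 w.1).1 = [::] &
                 valid (rho, (last a0 w.1).2) (proj1_sig w.2).1 (proj1_sig w.2).2]
  end.

Lemma fL_h z : fL (h z) = vprod V (fun t => wM (HV z t) (HV z t.+1)).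
Proof. rewrite /fL; congr (vprod V); apply: functional_extensionality => t; exact: pwE. Qed.

Lemma PI_h z : PI (h z) <-> forall t, vstep (HV z t) (HV z t.+1).
Proof. by []. Qed.

Lemma hP z : PJ z -> PI (h z).
Proof.
move=> hz; apply/PI_h => t; case: z hz => [Y|[u Y]] hz.
  rewrite !HV_inl /liftv; apply: vstep_lift; exact: hz t.
case: hz => hf hl hv; case: (ltnP t (size u)) => ht.
  rewrite !HV_lo // ?(ltnW ht) //; rewrite /liftv; apply: vstep_lift; exact: (proj1 (fvalid_nth _ _) hf).
rewrite -(subnK ht) -addSn !HV_hi //; exact: hv.
Qed.

Lemma hw z : PJ z -> fL (h z) = gR z.
Proof.
rewrite fL_h; case: z => [Y|[u Y]] hz.
  congr (vprod V); apply: functional_extensionality => t.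
  by rewrite !HV_inl /liftv wM_lift ?pwE //; exact: hz.
move: hz.
case=> hf hl hv; rewrite /gR /= hl eqxx (vprod_split _ (size u)); congr vscale.
  apply: fp_fw => t ht; rewrite !HV_lo // ?(ltnW ht) // /liftv wM_lift //.
  exact: (proj1 (fvalid_nth _ _) hf).
congr (vprod V); apply: functional_extensionality => t.
by rewrite -addSn !HV_hi // pwE.
Qed.

Lemma fL_zero x : ~ PI x -> fL x = vzero V.
Proof. exact: vprod_invalid. Qed.

Lemma gR_zero z : ~ PJ z -> gR z = vzero V.
Proof.
case: z => [Y|[u Y]] /=; first exact: vprod_invalid.
move=> hn; case: eqP => // hl.
case: (classic (fvalid a0 u)) => hf; last by rewrite fw_invalid // vscale0l.
rewrite vprod_invalid ?vscale0r // => hv; apply: hn; by split.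
Qed.


Lemma liftv_inj a b : liftv a = liftv b -> a = b.
Proof.
case: a => a1 a2; case: b => b1 b2; rewrite /liftv /= => -[/catsI -> ->] //.
Qed.

Lemma ne_rho tau : tau <> [::] -> tau ++ rho <> rho.
Proof.
case: tau => [|p tau] // _ e; have := congr1 size e; rewrite size_cat /= => /eqP.
by rewrite -[X in _ == X]add0n eqn_add2r.
Qed.

Lemma HV_inl_ne Y t : PJ (inl Y) -> (HV (inl Y) t).1 <> rho.
Proof.
move=> hv; rewrite HV_inl /=; apply: ne_rho; exact: vstep_src (hv t).
Qed.

Lemma HV_inr_ne u Y t : PJ (inr (u, Y)) -> t < size u -> (HV (inr (u, Y)) t).1 <> rho.
Proof.
case=> hf _ _ ht; rewrite HV_lo ?(ltnW ht) //=; apply: ne_rho.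
exact: vstep_src (proj1 (fvalid_nth _ _) hf t ht).
Qed.

Lemma HV_inr_eq u Y : PJ (inr (u, Y)) -> (HV (inr (u, Y)) (size u)).1 = rho.
Proof. by case=> _ hl _; rewrite -[size u]add0n HV_hi. Qed.

Lemma X_eq (Y1 Y2 : X) : (forall t, (proj1_sig Y1).1 t = (proj1_sig Y2).1 t /\
   (proj1_sig Y1).2 t = (proj1_sig Y2).2 t) -> Y1 = Y2.
Proof.
move=> e; apply: sig_eqI; case: (proj1_sig Y1) e => p1 j1; case: (proj1_sig Y2) => p2 j2 /= e.
by congr pair; apply: functional_extensionality => t; case: (e t).
Qed.

Lemma hinj z1 z2 : PJ z1 -> PJ z2 -> h z1 = h z2 -> z1 = z2.
Proof.
move=> p1 p2 e; have E t : HV z1 t = HV z2 t by rewrite /HV e.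
clear e; case: z1 p1 E => [Y1|[u1 Y1]] p1; case: z2 p2 => [Y2|[u2 Y2]] p2 E.
- congr inl; apply: X_eq => t; have := E t.+1; rewrite !HV_inl => /liftv_inj.
  by case.
- move: (E (size u2)) => /(congr1 fst); rewrite HV_inr_eq // => ee; case: (@HV_inl_ne Y1 (size u2) p1 ee).
- by move: (E (size u1)) => /(congr1 fst); rewrite HV_inr_eq // => /esym ee; case: (@HV_inl_ne Y2 (size u1) p2 ee).
- have em : size u1 = size u2.
    case: (ltngtP (size u1) (size u2)) => // hlt.
      by move: (E (size u1)) => /(congr1 fst); rewrite HV_inr_eq // => /esym ee; case: (@HV_inr_ne u2 Y2 _ p2 hlt ee).
    by move: (E (size u2)) => /(congr1 fst); rewrite HV_inr_eq // => ee; case: (@HV_inr_ne u1 Y1 _ p1 hlt ee).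
  have eu : u1 = u2.
    apply: (@eq_from_nth _ a0) => // t ht; apply: liftv_inj.
    have := E t.+1; rewrite !HV_lo //; rewrite -?em //.
  subst u2; congr (inr (u1, _)); apply: X_eq => t.
  case: p1 => _ hl1 _; case: p2 => _ hl2 _.
  have := E (t.+1 + size u1); rewrite !HV_hi //=; by case.
Qed.


Lemma hsurj x : PI x -> exists z, PJ z /\ h z = x.
Proof.
case: x => [[pis js] pl] hv.
pose Vt := vx (sigma ++ rho, i) pis js.
have hv' : forall t, vstep (Vt t) (Vt t.+1) := hv.
have suf : forall t, (forall s, s < t -> (Vt s).1 <> rho) ->
    exists tau, (Vt t).1 = tau ++ rho.
  elim=> [|t IH] hs; first by exists sigma.
  have [tau et] := IH (fun s hs' => hs s (leqW hs')).
  have tnz : tau <> [::] by move=> e0; apply: (hs t (ltnSn t)); rewrite et e0.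
  have := hv' t; case E: (Vt t) => [s y]; rewrite E /= in et; rewrite et.
  exact: vstep_suffix.
have lift_strip : forall t tau, (Vt t).1 = tau ++ rho ->
    (strip rho (Vt t).1 ++ rho, (Vt t).2) = Vt t.
  by move=> t tau et; rewrite et stripK -et -surjective_pairing.
have strip_nz : forall t tau, (Vt t).1 = tau ++ rho -> (Vt t).1 <> rho ->
    strip rho (Vt t).1 <> [::].
  by move=> t tau et hn; rewrite et stripK => e0; apply: hn; rewrite et e0.
case: (classic (exists t, (Vt t).1 == rho)) => [exP|hn].
- case: (ex_minnP exP) => m0 /eqP Pm0 minm.
  have hlt : forall s, s < m0 -> (Vt s).1 <> rho.
    move=> s hs e0; have := minm s (introT eqP e0); by rewrite leqNgt hs.
  have st : forall t, t <= m0 -> exists tau, (Vt t).1 = tau ++ rho.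
    move=> t ht; apply: suf => s hs; apply: hlt; exact: leq_trans hs ht.
  pose u := [seq (strip rho (Vt t).1, (Vt t).2) | t <- iota 1 m0].
  have su : size u = m0 by rewrite size_map size_iota.
  have nth_u : forall t, t < m0 -> nth a0 u t = (strip rho (pis t), js t).
    by move=> t ht; rewrite (nth_map 0) ?size_iota // nth_iota.
  have nth_au : forall t, t <= m0 -> nth a0 (a0 :: u) t = (strip rho (Vt t).1, (Vt t).2).
    case=> [|t] ht /=; first by rewrite stripK.
    exact: nth_u.
  have hmin : 0 < m0.
    rewrite lt0n; apply/eqP => e0; move: Pm0; rewrite e0 /=; exact: ne_rho.
  have Ypl : Pl l (fun t => js (t + m0)).
    by apply/(@Pl_shift l m0 (fun t => js (t + m0)) js).
  pose Y := exist (fun x : (nat -> G) * (nat -> Q) => Pl l x.2)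
     (fun t => pis (t + m0), fun t => js (t + m0)) Ypl.
  have hlast : last a0 u = (strip rho (Vt m0).1, (Vt m0).2).
    by rewrite (last_nth a0) su nth_au.
  exists (inr (u, Y)); split.
  + split.
    * apply/fvalid_nth => t; rewrite su => ht.
      rewrite !nth_au // ?(ltnW ht) //.
      have [tau1 e1] := st t (ltnW ht); have [tau2 e2] := st t.+1 ht.
      apply: (@vstep_unlift _ _ rho); first exact: (strip_nz t tau1 e1 (hlt t ht)).
      by rewrite /= (lift_strip t tau1 e1) (lift_strip t.+1 tau2 e2).
    * by rewrite hlast /= Pm0 /strip subnn take0.
    * move=> t.
      have ev : forall t, vx (rho, (last a0 u).2) (fun t => pis (t + m0))
                  (fun t => js (t + m0)) t = Vt (t + m0).
        case=> [|t'] /= //.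
        by rewrite add0n hlast /= -Pm0 -surjective_pairing.
      rewrite /= ev; exact: (hv' (t + m0)).
  + apply: sig_eqI => /=; congr pair; apply: functional_extensionality => t.
    * rewrite /catp su; case: ifP => ht.
        rewrite nth_u //=; have [tau e] := st t.+1 ht.
        by have := congr1 fst (lift_strip t.+1 tau e).
      by rewrite subnK // leqNgt ht.
    * rewrite /catj su; case: ifP => ht; first by rewrite nth_u.
      by rewrite subnK // leqNgt ht.
- have hn' : forall t, (Vt t).1 <> rho by move=> t e0; apply: hn; exists t; apply/eqP.
  have st : forall t, exists tau, (Vt t).1 = tau ++ rho.
    move=> t; apply: suf => s _; exact: hn'.
  pose Y := exist (fun x : (nat -> G) * (nat -> Q) => Pl l x.2)
     (fun t => strip rho (pis t), js) pl.
  exists (inl Y); split.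
  + have ev : forall t, vx a0 (fun t => strip rho (pis t)) js t = (strip rho (Vt t).1, (Vt t).2).
      by case=> [|t] //=; rewrite stripK.
    move=> t; rewrite /= !ev.
    have [tau1 e1] := st t; have [tau2 e2] := st t.+1.
    apply: (@vstep_unlift _ _ rho); first exact: (strip_nz t tau1 e1 (hn' t)).
    by rewrite /= (lift_strip t tau1 e1) (lift_strip t.+1 tau2 e2).
  + apply: sig_eqI => /=; congr pair; apply: functional_extensionality => t.
    have [tau e] := st t.+1.
    by have := congr1 fst (lift_strip t.+1 tau e).
Qed.


Lemma key : omega_l V M l (sigma ++ rho) i =
  vadd (omega_l V M l sigma i)
       (vsum (fun q : Q => vscale (bmx_star M sigma [::] i q) (omega_l V M l rho q))).
Proof.
have K1 : vsum (fun q : Q => vscale (bmx_star M sigma [::] i q) (omega_l V M l rho q)) =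
          vsum (fun w : seq VT * X => gR (inr w)).
  under sum_ext => q do rewrite star_expand vsum_scalel.
  rewrite vexch vpair; apply: sum_ext => u.
  case el: (last a0 u) => [s q0]; case: (eqVneq s [::]) => [es|ns].
  - subst s; rewrite (@vnz _ _ q0); last first.
      by move=> q hq; rewrite ifN ?vscale0l //; apply/eqP => -[e]; apply: hq.
    rewrite eqxx /= el /= vsum_scaler; by [].
  - transitivity (vzero V).
      rewrite -(vsum0 Q); apply: sum_ext => q.
      rewrite ifN ?vscale0l //; apply/eqP => -[e _]; by rewrite e eqxx in ns.
    rewrite -(vsum0 X); apply: sum_ext => Y; by rewrite /= el /= ifN.
rewrite K1 -[omega_l V M l sigma i]/(vsum (fun Y : X => gR (inl Y))) -vsumtype.
apply: (@vsupp _ _ fL gR PI PJ h).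
- exact: fL_zero.
- exact: gR_zero.
- exact: hP.
- exact: hinj.
- exact: hsurj.
- exact: hw.
Qed.

End Key.

Lemma star_eps i q : bmx_star M [::] [::] i q = if i == q then sone S else szero S.
Proof.
rewrite star_expand (@snz _ _ [::]) /=; last first.
  case=> [|b u] // _; rewrite /= wM_nstep ?smul0l ?if_same //.
  by case=> p [pi [tau []]].
by rewrite xpair_eqE eqxx.
Qed.

Lemma vsum_ord (N k : nat) (e : N = k.+1) (F : nat -> V) :
  vsum (fun j : 'I_N => F j) = vadd (vsum (fun j : 'I_k => F j)) (F k).
Proof.
subst N.
pose hh (x : 'I_k + unit) : 'I_k.+1 :=
  match x with inl j => widen_ord (leqnSn k) j | inr _ => ord_max end.
rewrite (@vreindex _ _ hh) ?vsumtype.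
- congr vadd; rewrite (@vsum_single _ _ _ _ tt) //; by case.
- case=> [j1|[]] [j2|[]] //= e.
  + by congr inl; apply: val_inj; move/(congr1 val): e.
  + by move/(congr1 val): e => /= e; have := ltn_ord j1; rewrite e ltnn.
  + by move/(congr1 val): e => /= e; have := ltn_ord j2; rewrite -e ltnn.
- move=> j; case: (ltnP j k) => hj.
    by exists (inl (Ordinal hj)); apply: val_inj.
  exists (inr tt); apply: val_inj => /=; apply/eqP; rewrite eqn_leq hj.
  by rewrite -ltnS ltn_ord.
Qed.

End Main.

Theorem lemma5 (S : CSemiring) (V : CSemimodulePair S) (n : nat) (Gamma : finType)
    (M : bmx S Gamma n) :
  0 < n -> pushdown_transition M ->
  forall (p : Gamma) (ps : seq Gamma) (l : nat), l <= n ->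
  forall i : 'I_n,
    omega_l V M l (p :: ps) i =
    vsum (fun j : 'I_(size (p :: ps)) =>
      vsum (fun m : 'I_n =>
        vscale (bmx_star M (take j (p :: ps)) [::] i m)
               (omega_l V M l [:: nth p (p :: ps) j] m))).
Proof.
move=> _ HM p ps l _.
elim/last_ind: ps => [|ps a IH] i.
- rewrite (@vsum_ord S V 1 0 erefl (fun j => vsum (fun m : 'I_n =>
        vscale (bmx_star M (take j [:: p]) [::] i m)
               (omega_l V M l [:: nth p [:: p] j] m)))).
  rewrite vsum_empty; last by case.
  rewrite vadd0 /= (@vnz _ _ _ _ i).
    by rewrite (star_eps HM) eqxx vscale1.
  move=> m hm; rewrite (star_eps HM) ifN ?vscale0l //; apply/eqP => e; by apply: hm.
- rewrite -cats1 -cat_cons (@key S V n Gamma M HM) //.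
  have e : size ((p :: ps) ++ [:: a]) = (size (p :: ps)).+1 by rewrite size_cat addn1.
  rewrite (@vsum_ord S V _ _ e (fun j => vsum (fun m : 'I_n =>
        vscale (bmx_star M (take j ((p :: ps) ++ [:: a])) [::] i m)
               (omega_l V M l [:: nth p ((p :: ps) ++ [:: a]) j] m)))).
  congr vadd.
  + rewrite IH; apply: sum_ext => j; apply: sum_ext => m.
    by rewrite takel_cat ?nth_cat ?ltn_ord // ltnW.
  + apply: sum_ext => m.
    by rewrite take_size_cat // nth_cat ltnn subnn.
Qed.
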